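(* Let $n,k$ be positive integers with $n \geq 3(n-k)$ and $n\geq k$, and let $C\in\mathcal{K}_k(n)$. Then there is no chord $c$ of $C$ such that both $s_c$ and $e_c$ lie in $M_{n,k}=\{k+1,k+2,\dots,2n-k\}$.
   Context: A linear chord diagram of size $n$ is a partition of $\{1,2,\dots,2n\}$ into blocks of size two, called chords. For a chord $c=\{s_c,e_c\}$ with $s_c<e_c$, $s_c$ is its start point, $e_c$ its end point, and its length is $e_c-s_c$. $\mathcal{K}_k(n)$ is the set of all linear chord diagrams of size $n$ in which every chord has length at least $k$. *)

(* Defs.v *)
From mathcomp Require Import all_boot all_order.
Set Implicit Arguments. Unset Strict Implicit. Unset Printing Implicit Defensive.

(* Points: the ordinal x : 'I_(2n) represents the point label x.+1 in {1,...,2n}. *)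
Definition label (m : nat) (x : 'I_m) : nat := (nat_of_ord x).+1.

Definition linear_chord_diagram (n : nat) (C : {set {set 'I_(2 * n)}}) : bool :=
  partition C [set: 'I_(2 * n)] && [forall c in C, #|c| == 2].

(* Start point s_c and end point e_c of a chord c: the points x < y of c.
   The length e_c - s_c of chord c is at least k. *)
Definition chord_length_ge (n k : nat) (c : {set 'I_(2 * n)}) : bool :=
  [forall x in c, forall y in c, (label x < label y) ==> (k <= label y - label x)].

Definition K (k n : nat) (C : {set {set 'I_(2 * n)}}) : bool :=
  linear_chord_diagram C && [forall c in C, chord_length_ge k c].

Definition inM (n k p : nat) : bool := (k.+1 <= p) && (p <= 2 * n - k).

(* Main.v *)
Require Import Defs.
From mathcomp Require Import all_boot all_order.
From mathcomp Require Import zify.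

Theorem lemma1 (n k : nat) (C : {set {set 'I_(2 * n)}}) :
  0 < n -> 0 < k -> 3 * (n - k) <= n -> k <= n -> K k C ->
  ~ (exists2 c, c \in C & forall x, x \in c -> inM n k (label x)).
Proof.
move=> n0 k0 h3 hkn /andP [/andP [_ /forallP Hc2] /forallP Hl] [c cC HM].
have /cards2P [x [y [xy ce]]] := implyP (Hc2 c) cC.
have /forallP Hlc := implyP (Hl c) cC.
have xc : x \in c by rewrite ce !inE eqxx.
have yc : y \in c by rewrite ce !inE eqxx orbT.
have := HM x xc; have := HM y yc; rewrite /inM.
have /forallP Hx := implyP (Hlc x) xc.
have /forallP Hy := implyP (Hlc y) yc.
have Hxy := implyP (Hx y) yc; have Hyx := implyP (Hy x) xc.
have nxy : nat_of_ord x != nat_of_ord y by [].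
move: Hxy Hyx nxy; rewrite /label => Hxy Hyx nxy.
case: (ltngtP x y) => H.
- move: Hxy; rewrite ltnS H /= => Hxy; lia.
- move: Hyx; rewrite ltnS H /= => Hyx; lia.
- by rewrite H eqxx in nxy.
Qed.
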